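(* Let $M'\in\mathbb{R}^{n\times m}$ and let $\mathcal{M}\subseteq\mathcal{Q}(M')$ be such that for every $M\in\mathcal{M}$ the DSR graph $G_{M,M^t}$ is steady. Then for any $A,B^t\in\overline{\mathcal{M}}$ (the closure of $\mathcal{M}$), the matrix $AB$ is a $P_0$-matrix.
   Context: For $M\in\mathbb{R}^{n\times m}$, the qualitative class $\mathcal{Q}(M)$ is the set of real $n\times m$ matrices with the same entrywise sign pattern (signs in $\{-,0,+\}$) as $M$. A square real matrix is a $P_0$-matrix if all principal minors are nonnegative. DSR graphs: for $A\in\mathbb{R}^{n\times m}$, $B\in\mathbb{R}^{m\times n}$, $G_{A,B}$ is the signed, labelled bipartite digraph with S-vertices $S_1,\dots,S_n$ and R-vertices $R_1,\dots,R_m$, with an arc $R_j\to S_i$ of sign $\mathrm{sign}(A_{ij})$ iff $A_{ij}\ne0$ and an arc $S_i\to R_j$ of sign $\mathrm{sign}(B_{ji})$ iff $B_{ji}\ne0$; a pair of antiparallel arcs of the same sign is regarded as a single undirected edge. An edge arising from $A_{ij}\ne0$ (R-to-S or undirected) has label $|A_{ij}|$; an edge with only S-to-R orientation has label $\infty$. A cycle is a nonempty closed walk (traversing edges consistently with orientation) repeating no vertex except first$=$last. A cycle $(e_1,\dots,e_{2r})$ is an s-cycle if all labels are finite and $\prod_{i=1}^r l(e_{2i-1})=\prod_{i=1}^r l(e_{2i})$. $G_{A,B}$ is steady if all of its cycles are s-cycles. *)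

(* Defs.v *)
From HB Require Import structures.
From mathcomp Require Import all_boot all_order all_algebra.
From mathcomp Require Import reals.
Set Implicit Arguments. Unset Strict Implicit. Unset Printing Implicit Defensive.
Import Order.TTheory GRing.Theory Num.Theory.
Local Open Scope ring_scope.

Section DSR.
Variable R : realType.

Definition qual_class (n m : nat) (M' M : 'M[R]_(n, m)) : Prop :=
  forall i j, Num.sg (M i j) = Num.sg (M' i j).

Definition principal_submx (n : nat) (M : 'M[R]_n) (I : {set 'I_n}) : 'M[R]_#|I| :=
  \matrix_(a < #|I|, b < #|I|) M (enum_val a) (enum_val b).

Definition P0_matrix (n : nat) (M : 'M[R]_n) : Prop :=
  forall I : {set 'I_n}, 0 <= \det (principal_submx M I).

Definition in_closure (n m : nat) (S : 'M[R]_(n, m) -> Prop) (A : 'M[R]_(n, m)) : Prop :=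
  forall e : R, 0 < e -> exists M, S M /\ forall i j, `|A i j - M i j| < e.

(** Vertices: S_i = inl i, R_j = inr j.
    Edges between S_i and R_j are of three kinds:
    - [Und]  : undirected edge (antiparallel arcs of the same sign), label |A_ij|;
    - [ArcRS]: arc R_j -> S_i only (not merged), label |A_ij|;
    - [ArcSR]: arc S_i -> R_j only (not merged), label infinity. *)
Inductive ekind := Und | ArcRS | ArcSR.

Definition merged (n m : nat) (A : 'M[R]_(n, m)) (B : 'M[R]_(m, n)) i j : bool :=
  [&& A i j != 0, B j i != 0 & Num.sg (A i j) == Num.sg (B j i)].

Definition dsr_edge (n m : nat) (A : 'M[R]_(n, m)) (B : 'M[R]_(m, n))
    (i : 'I_n) (j : 'I_m) (k : ekind) : bool :=
  match k with
  | Und => merged A B i j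
  | ArcRS => (A i j != 0) && ~~ merged A B i j
  | ArcSR => (B j i != 0) && ~~ merged A B i j
  end.

Record step (n m : nat) := Step { st_i : 'I_n; st_j : 'I_m; st_k : ekind; st_d : bool }.

Definition step_ok n m (s : step n m) : bool :=
  match st_k s with Und => true | ArcRS => ~~ st_d s | ArcSR => st_d s end.

Definition st_start n m (s : step n m) : 'I_n + 'I_m :=
  if st_d s then inl (st_i s) else inr (st_j s).
Definition st_end n m (s : step n m) : 'I_n + 'I_m :=
  if st_d s then inr (st_j s) else inl (st_i s).

Definition dsr_cycle (n m : nat) (A : 'M[R]_(n, m)) (B : 'M[R]_(m, n))
    (c : seq (step n m)) : Prop :=
  [/\ (0 < size c)%N,
      all (fun s => dsr_edge A B (st_i s) (st_j s) (st_k s) && step_ok s) c,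
      cycle (fun s t => st_end s == st_start t) c
    & uniq (map (@st_start n m) c)].

(** Labels: [None] stands for infinity. *)
Definition st_label n m (A : 'M[R]_(n, m)) (s : step n m) : option R :=
  match st_k s with ArcSR => None | _ => Some `|A (st_i s) (st_j s)| end.

(** s-cycle (e_1,...,e_{2r}): all labels finite and
    prod l(e_odd) = prod l(e_even).  Positions are 0-based below. *)
Definition s_cycle (n m : nat) (A : 'M[R]_(n, m)) (c : seq (step n m)) : Prop :=
  all (fun s => st_label A s != None) c /\
  let ls := map (fun s => odflt 0 (st_label A s)) c in
  \prod_(t < size ls | ~~ odd t) ls`_t = \prod_(t < size ls | odd t) ls`_t.

Definition steady (n m : nat) (A : 'M[R]_(n, m)) (B : 'M[R]_(m, n)) : Prop :=
  forall c : seq (step n m), dsr_cycle A B c -> s_cycle A c.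

End DSR.

(* Main.v *)
Require Import Defs.
From HB Require Import structures.
From mathcomp Require Import all_boot all_order all_algebra all_fingroup.
From mathcomp Require Import reals.
From mathcomp Require Import all_classical all_reals all_analysis.
Set Implicit Arguments. Unset Strict Implicit. Unset Printing Implicit Defensive.
Import Order.TTheory GRing.Theory Num.Theory.
Import numFieldNormedType.Exports.
Local Open Scope ring_scope.

Section S.
Variable R : realType.

Lemma expand k m (P : 'M[R]_(k,m)) (Q : 'M[R]_(m,k)) :
  \det (P *m Q) *+ k`! = \sum_(f : {ffun 'I_k -> 'I_m})
     \det (\matrix_(a,b) P a (f b)) * \det (\matrix_(a,b) Q (f a) b).
Proof.
pose T (f : {ffun 'I_k -> 'I_m}) (s : 'S_k) :=
  (-1) ^+ s * \prod_i (P i (f i) * Q (f i) (s i)).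
have E1 : \det (P *m Q) = \sum_f \sum_s T f s.
  rewrite exchange_big; apply: eq_bigr => s _ /=.
  rewrite /T -big_distrr /=; congr (_ * _).
  rewrite -(bigA_distr_bigA (fun i l => P i l * Q l (s i))) /=.
  by apply: eq_bigr => i _; rewrite mxE.
have E2 : forall t : 'S_k, \sum_f \sum_s T f s =
   \sum_(f : {ffun 'I_k -> 'I_m}) ((-1) ^+ t * \prod_i P i (f (t i))) *
          \sum_(s : 'S_k) ((-1) ^+ s * \prod_i Q (f i) (s i)).
  move=> t.
  have inj_ft : injective (fun f : {ffun 'I_k -> 'I_m} => [ffun i => f (t i)]).
    move=> f1 f2 /ffunP H; apply/ffunP => i.
    by have := H (t^-1 i)%g; rewrite !ffunE permKV.
  rewrite (reindex_inj inj_ft); apply: eq_bigr => f _.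
  rewrite (reindex_inj (mulgI t)) big_distrr; apply: eq_bigr => s _ /=.
  rewrite /T odd_permM signr_addb big_split /=.
  have -> : \prod_i Q ([ffun i0 => f (t i0)] i) ((t * s)%g i) =
            \prod_i Q (f i) (s i).
    by rewrite [RHS](reindex_perm t); apply: eq_bigr => i _; rewrite ffunE permM.
  under eq_bigr do rewrite ffunE.
  by rewrite mulrACA.
rewrite E1 -card_Sn -sumr_const.
rewrite (eq_bigr _ (fun t _ => E2 t)) exchange_big /=.
apply: eq_bigr => f _; rewrite -big_distrl /=.
congr (_ * _); apply: eq_bigr => s _; congr (_ * _); apply: eq_bigr => i _; by rewrite mxE.
Qed.
End S.


Section S.
Variable R : realType.
Lemma prod_even (F : nat -> R) L :
  \prod_(0 <= u < L.*2 | ~~ odd u) F u = \prod_(0 <= t < L) F t.*2.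
Proof.
elim: L => [|L IH]; first by rewrite !big_geq.
rewrite doubleS big_mkcond !big_nat_recr //= -big_mkcond IH odd_double /=.
by rewrite mulr1.
Qed.

Lemma prod_odd (F : nat -> R) L :
  \prod_(0 <= u < L.*2 | odd u) F u = \prod_(0 <= t < L) F t.*2.+1.
Proof.
elim: L => [|L IH]; first by rewrite !big_geq.
rewrite doubleS big_mkcond !big_nat_recr //= -big_mkcond IH odd_double /=.
by rewrite mulr1.
Qed.

Lemma prod_traject k (rho : 'S_k) (G : 'I_k -> R) a0 L :
  \prod_(a <- traject rho a0 L) G a = \prod_(0 <= t < L) G (iter t rho a0).
Proof.
elim: L a0 => [|L IH] a0; first by rewrite big_nil big_geq.
rewrite /= big_cons big_nat_recl // IH; congr (_ * _).
by apply: eq_bigr => t _; rewrite -iterSr.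
Qed.

Lemma prod_orbit k (rho : 'S_k) (G : 'I_k -> R) a0 :
  \prod_(a in porbit rho a0) G a = \prod_(0 <= t < #|porbit rho a0|) G (iter t rho a0).
Proof.
rewrite -prod_traject big_uniq ?uniq_traject_porbit //.
by apply: eq_bigl => a; rewrite porbit_traject.
Qed.

Lemma prod_rot k (rho : 'S_k) (G : 'I_k -> R) a0 :
  \prod_(0 <= t < #|porbit rho a0|) G (rho (iter t rho a0)) =
  \prod_(0 <= t < #|porbit rho a0|) G (iter t rho a0).
Proof.
have := iter_porbit rho a0; have := card_porbit_neq0 rho a0.
case: #|porbit rho a0| => // L _ HL.
by rewrite big_nat_recr // big_nat_recl //= -iterS HL mulrC.
Qed.

End S.

Section Cyc.
Variables (R : realType) (n m : nat) (M : 'M[R]_(n,m)).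
Hypothesis hS : steady M M^T.
Variables (k : nat) (r : 'I_k -> 'I_n) (g : 'I_k -> 'I_m).
Hypotheses (rinj : injective r) (ginj : injective g).
Hypothesis h1 : forall a, M (r a) (g a) != 0.

Lemma cyc_prod (rho : 'S_k) (h2 : forall a, M (r a) (g (rho a)) != 0) a0 :
  \prod_(0 <= t < #|porbit rho a0|) `|M (r (iter t rho a0)) (g (rho (iter t rho a0)))| =
  \prod_(0 <= t < #|porbit rho a0|) `|M (r (rho (iter t rho a0))) (g (rho (iter t rho a0)))|.
Proof.
set L := #|porbit rho a0|.
pose at_ t := iter t rho a0.
pose ev t := @Step n m (r (at_ t)) (g (rho (at_ t))) Und true.
pose od t := @Step n m (r (rho (at_ t))) (g (rho (at_ t))) Und false.
pose h u := if odd u then od u./2 else ev u./2.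
have hE t : h t.*2 = ev t by rewrite /h odd_double doubleK.
have hO t : h t.*2.+1 = od t by rewrite /h /= odd_double /= uphalf_double.
have Lpos : (0 < L)%N by rewrite lt0n card_porbit_neq0.
have atL : at_ L = a0 by exact: iter_porbit.
have at_inj t t' : (t < L)%N -> (t' < L)%N -> at_ t = at_ t' -> t = t'.
  move=> ht ht' E; apply/eqP.
  rewrite -(@nth_uniq _ a0 (traject rho a0 L)) ?size_traject ?uniq_traject_porbit //.
  by rewrite !nth_traject //; apply/eqP; exact: E.
clearbody L.
have dec u : exists t, u = t.*2 \/ u = t.*2.+1.
  exists u./2; rewrite -[u in u = _](odd_double_half u) -[u in _ \/ u = _](odd_double_half u).
  by case: odd; [right|left]; rewrite ?add1n ?add0n.
have sE t : st_start (ev t) = inl (r (at_ t)) by reflexivity.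
have sO t : st_start (od t) = inr (g (rho (at_ t))) by reflexivity.
set c := mkseq h L.*2.
have Hc : dsr_cycle M M^T c.
  split.
  - by rewrite size_mkseq double_gt0.
  - rewrite /c /mkseq all_map; apply/allP => u _; rewrite /= /h; case: odd; rewrite /= /merged mxE eqxx ?h1 ?h2 //.
  - rewrite (cycle_path (h 0%N)); apply/(pathP (h 0%N)) => i; rewrite size_mkseq => Hi.
    case: i Hi => [|i] Hi.
    + rewrite -nth_last nth_mkseq size_mkseq; last by rewrite prednK ?double_gt0 // leqnn.
      have [L' EL] : exists L', L = L'.+1 by exists L.-1; rewrite prednK.
      rewrite EL in atL *; rewrite doubleS /= hO.
      rewrite nth_mkseq ?double_gt0 //; apply/eqP; rewrite /=; congr (inl (r _)); exact: atL.
    + rewrite /= !nth_mkseq //; last exact: ltnW.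
      have [t [->|->]] := dec i; first by rewrite hE hO.
      by rewrite hO -doubleS hE.
  - rewrite /c /mkseq -map_comp map_inj_in_uniq ?iota_uniq // => u v.
    rewrite !mem_iota !add0n => /andP[_ Hu] /andP[_ Hv].
    have [t [Et|Et]] := dec u; have [t' [Et'|Et']] := dec v; subst u v.
    + rewrite /comp (hE t) (hE t') (sE t) (sE t') => -[] /rinj /at_inj.
      by rewrite ltn_double in Hu; rewrite ltn_double in Hv => /(_ Hu Hv) ->.
    + by rewrite /comp (hE t) (hO t') (sE t) (sO t').
    + by rewrite /comp (hO t) (hE t') (sO t) (sE t').
    + rewrite /comp (hO t) (hO t') (sO t) (sO t') => -[] /ginj /perm_inj /at_inj.
      by rewrite ltn_Sdouble in Hu; rewrite ltn_Sdouble in Hv => /(_ Hu Hv) ->.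
have [_ /= Heq] := hS Hc.
move: Heq; set ls := [seq _ | s <- c].
have Hsz : size ls = L.*2 by rewrite size_map size_mkseq.
have Fev t : (t < L)%N -> ls`_t.*2 = `|M (r (at_ t)) (g (rho (at_ t)))|.
  move=> Ht; rewrite (nth_map (h 0%N)) ?size_mkseq ?ltn_double //.
  by rewrite nth_mkseq ?ltn_double // hE.
have Fod t : (t < L)%N -> ls`_t.*2.+1 = `|M (r (rho (at_ t))) (g (rho (at_ t)))|.
  move=> Ht; rewrite (nth_map (h 0%N)) ?size_mkseq ?ltn_Sdouble //.
  by rewrite nth_mkseq ?ltn_Sdouble // hO.
rewrite Hsz -(big_mkord (fun t => ~~ odd t)) -(big_mkord (fun t : nat => odd t)).
rewrite prod_even prod_odd.
under eq_big_nat => t /andP[_ Ht] do rewrite (Fev t Ht).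
under [in X in _ = X -> _]eq_big_nat => t /andP[_ Ht] do rewrite (Fod t Ht).
by [].
Qed.
End Cyc.

Section Ind.
Variables (R : realType) (n m : nat) (M : 'M[R]_(n,m)).
Hypothesis hS : steady M M^T.
Variables (k : nat) (r : 'I_k -> 'I_n) (g : 'I_k -> 'I_m).
Hypotheses (rinj : injective r) (ginj : injective g).
Hypothesis h1 : forall a, M (r a) (g a) != 0.

Lemma cyc_orbit (rho : 'S_k) (h2 : forall a, M (r a) (g (rho a)) != 0) a0 :
  \prod_(a in porbit rho a0) `|M (r a) (g (rho a))| =
  \prod_(a in porbit rho a0) `|M (r a) (g a)|.
Proof.
rewrite !prod_orbit (cyc_prod hS rinj ginj h1 h2).
by rewrite (prod_rot rho (fun a => `|M (r a) (g a)|)).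
Qed.

Lemma prod_eq_perm (rho : 'S_k) : (forall a, M (r a) (g (rho a)) != 0) ->
  \prod_a `|M (r a) (g (rho a))| = \prod_a `|M (r a) (g a)|.
Proof.
have [N] := ubnP #|[set a | rho a != a]|; elim: N rho => // N IH rho HN h2.
case: (pickP (fun a => rho a != a)) => [a0 Ha0 | Hfix]; last first.
  by apply: eq_bigr => a _; have := Hfix a; move=> /negbFE/eqP ->.
set O := porbit rho a0.
have memO a : (rho a \in O) = (a \in O).
  rewrite /O -!eq_porbit_mem.
  by have := porbit_perm rho 1 a; rewrite expg1 => ->.
pose f' a := if a \in O then a else rho a.
have f'inj : injective f'.
  move=> a b; rewrite /f'; case: ifP => Ha; case: ifP => Hb //.
  - by move=> E; move: Ha; rewrite E memO Hb.
  - by move=> E; move: Hb; rewrite -E memO Ha.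
  - exact: perm_inj.
pose rho' := perm f'inj.
have rho'E a : rho' a = if a \in O then a else rho a by rewrite permE.
have h2' a : M (r a) (g (rho' a)) != 0 by rewrite rho'E; case: ifP.
have Hlt : (#|[set a | rho' a != a]| < N)%N.
  suff Hp : [set a | rho' a != a] \proper [set a | rho a != a].
    by apply: leq_trans (proper_card Hp) _; rewrite -ltnS.
  rewrite properE; apply/andP; split.
    apply/fintype.subsetP => a; rewrite !inE rho'E; by case: ifP => // _; rewrite eqxx.
  apply/fintype.subsetPn; exists a0; first by rewrite inE.
  by rewrite inE rho'E porbit_id negbK.
rewrite -(IH rho' Hlt h2').
rewrite [LHS](bigID (fun a => a \in O)) [RHS](bigID (fun a => a \in O)) /=.
congr (_ * _).
  rewrite cyc_orbit //; apply: eq_bigr => a Ha; by rewrite rho'E Ha.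
by apply: eq_bigr => a Ha; rewrite rho'E (negPf Ha).
Qed.
End Ind.

Definition subdet (R : realType) n m k (X : 'M[R]_(n,m)) (r : 'I_k -> 'I_n) (f : 'I_k -> 'I_m) :=
  \det (\matrix_(a, b) X (r a) (f b)).

Section Sign.
Variables (R : realType) (n m : nat) (M' : 'M[R]_(n,m)).
Variables (k : nat) (r : 'I_k -> 'I_n) (f : 'I_k -> 'I_m).
Hypotheses (rinj : injective r) (finj : injective f).

Definition Esg := \sum_(s : 'S_k) (-1) ^+ s * \prod_a Num.sg (M' (r a) (f (s a))).

Lemma decomp (M : 'M[R]_(n,m)) : qual_class M' M -> steady M M^T ->
  exists2 c, 0 <= c & subdet M r f = c * Esg.
Proof.
move=> hQ hS.
have nz i j : (M i j != 0) = (M' i j != 0) by rewrite -sgr_eq0 hQ sgr_eq0.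
case: (pickP (fun s : 'S_k => [forall a, M' (r a) (f (s a)) != 0])) => [s0 Hs0 | Hnone].
- exists (\prod_a `|M (r a) (f (s0 a))|); first by apply: prodr_ge0 => a _.
  rewrite /subdet /Esg big_distrr; apply: eq_bigr => s _ /=.
  rewrite [RHS]mulrCA; congr (_ * _).
  under eq_bigr do rewrite mxE.
  case: (boolP [forall a, M' (r a) (f (s a)) != 0]) => Hs.
  + rewrite (_ : \prod_a M (r a) (f (s a)) =
                 \prod_a (Num.sg (M' (r a) (f (s a))) * `|M (r a) (f (s a))|)); last first.
      by apply: eq_bigr => a _; rewrite -hQ -numEsg.
    rewrite big_split /= mulrC; congr (_ * _).
    have ginj : injective (fun a => f (s0 a)) by move=> a b /finj/perm_inj.
    have h1 : forall a, M (r a) (f (s0 a)) != 0.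
      by move=> a; rewrite nz; move/forallP: Hs0; apply.
    have h2 : forall a, M (r a) (f (s0 ((s * s0^-1)%g a))) != 0.
      by move=> a; rewrite permM permKV nz; move/forallP: Hs; apply.
    rewrite -(prod_eq_perm hS rinj ginj h1 h2).
    by apply: eq_bigr => a _; rewrite permM permKV.
  + move/forallPn: Hs => [a]; rewrite negbK => Ha.
    have Ha' : M (r a) (f (s a)) = 0 by apply/eqP; move: (nz (r a) (f (s a))); rewrite Ha => /negbFE.
    by rewrite (bigD1 a) //= Ha' mul0r [X in _ = _ * X](bigD1 a) //= (eqP Ha) sgr0 mul0r mulr0.
- exists 0 => //; rewrite mul0r /subdet; apply: big1 => s _.
  have := Hnone s; move/negbT/forallPn => [a]; rewrite negbK => Ha.
  have Ha' : M (r a) (f (s a)) = 0 by apply/eqP; move: (nz (r a) (f (s a))); rewrite Ha => /negbFE.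
  by rewrite (bigD1 a) //= mxE Ha' mul0r mulr0.
Qed.

Lemma pair_ge0 (M1 M2 : 'M[R]_(n,m)) : qual_class M' M1 -> qual_class M' M2 ->
  steady M1 M1^T -> steady M2 M2^T -> 0 <= subdet M1 r f * subdet M2 r f.
Proof.
move=> hQ1 hQ2 hS1 hS2.
have [c1 c1ge E1] := decomp hQ1 hS1; have [c2 c2ge E2] := decomp hQ2 hS2.
rewrite E1 E2 mulrACA; apply: mulr_ge0; first exact: mulr_ge0.
by rewrite -expr2 sqr_ge0.
Qed.
End Sign.

Local Open Scope classical_set_scope.
Local Open Scope ring_scope.

Section Clos.
Variables (R : realType) (n m : nat) (M' : 'M[R]_(n,m)) (MM : 'M[R]_(n, m) -> Prop).
Hypotheses (hQ : forall M, MM M -> qual_class M' M) (hS : forall M, MM M -> steady M M^T).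
Variables (k : nat) (r : 'I_k -> 'I_n) (f : 'I_k -> 'I_m).
Hypotheses (rinj : injective r).

Lemma subdetE (X : 'M[R]_(n,m)) :
  subdet X r f = \sum_(s : 'S_k) (-1) ^+ s * \prod_a X (r a) (f (s a)).
Proof.
by apply: eq_bigr => s _; congr (_ * _); apply: eq_bigr => a _; rewrite mxE.
Qed.

Lemma seq_of (X : 'M[R]_(n,m)) : in_closure MM X ->
  exists u : nat -> 'M[R]_(n,m), (forall p, MM (u p)) /\
     (fun p => subdet (u p) r f) @ \oo --> subdet X r f.
Proof.
move=> hX.
have : forall p : nat, exists M, MM M /\ forall i j, `|X i j - M i j| < p.+1%:R^-1.
  by move=> p; apply: hX; rewrite invr_gt0 ltr0Sn.
case/choice => u Hu; exists u; split; first by move=> p; case: (Hu p).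
have cu i j : (fun p => u p i j) @ \oo --> X i j.
  apply/cvgrPdist_lt => e e0.
  have := near_infty_natSinv_lt (PosNum e0).
  by apply: filterS => p Hp; exact: lt_trans (proj2 (Hu p) i j) Hp.
rewrite subdetE; under eq_fun do rewrite subdetE.
apply: cvg_big => [|s _]; first exact: add_continuous.
apply: cvgMl_tmp.
apply: cvg_big => [|a _]; first exact: mul_continuous.
exact: cu.
Qed.
End Clos.

Section Clos2.
Variables (R : realType) (n m : nat) (M' : 'M[R]_(n,m)) (MM : 'M[R]_(n, m) -> Prop).
Hypotheses (hQ : forall M, MM M -> qual_class M' M) (hS : forall M, MM M -> steady M M^T).
Variables (k : nat) (r : 'I_k -> 'I_n) (f : 'I_k -> 'I_m).
Hypotheses (rinj : injective r).

Lemma closure_pair (X Y : 'M[R]_(n,m)) : in_closure MM X -> in_closure MM Y ->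
  0 <= subdet X r f * subdet Y r f.
Proof.
move=> hX hY.
case: (boolP (injectiveb f)) => [/injectiveP finj | /injectivePn [a1 [a2 D E]]]; last first.
  by rewrite /subdet -det_tr (determinant_alternate D) ?mul0r // => b; rewrite !mxE E.
have [u [Mu cu]] := seq_of r f hX; have [v [Mv cv]] := seq_of r f hY.
have cuv : (fun p => subdet (u p) r f * subdet (v p) r f) @ \oo --> subdet X r f * subdet Y r f by apply: cvgM.
rewrite -(cvg_lim _ cuv) //.
apply: limr_ge; first exact: cvgP cuv.
apply: nearW => p /=.
exact: (pair_ge0 rinj finj (hQ (Mu p)) (hQ (Mv p)) (hS (Mu p)) (hS (Mv p))).
Qed.
End Clos2.

Local Close Scope classical_set_scope.

Theorem lemma2p8 (R : realType) (n m : nat) (M' : 'M[R]_(n, m))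
    (MM : 'M[R]_(n, m) -> Prop)
    (hQ : forall M, MM M -> qual_class M' M)
    (hS : forall M, MM M -> steady M M^T)
    (A : 'M[R]_(n, m)) (B : 'M[R]_(m, n))
    (hA : in_closure MM A) (hB : in_closure MM B^T) :
  P0_matrix (A *m B).
Proof.
move=> I.
have -> : principal_submx (A *m B) I =
   (\matrix_(a, j) A (enum_val a) j) *m (\matrix_(j, b) B j (enum_val b)).
  by apply/matrixP => a b; rewrite !mxE; apply: eq_bigr => j _; rewrite !mxE.
rewrite -(pmulrn_lge0 _ (fact_gt0 #|I|)) expand; apply: sumr_ge0 => ff _.
have -> : \det (\matrix_(a, b) (\matrix_(a0, j) A (enum_val a0) j) a (ff b)) =
          subdet A (@enum_val _ (mem I)) ff.
  by rewrite /subdet; congr (\det _); apply/matrixP => a b; rewrite !mxE.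
have -> : \det (\matrix_(a, b) (\matrix_(j, b0) B j (enum_val b0)) (ff a) b) =
          subdet B^T (@enum_val _ (mem I)) ff.
  by rewrite /subdet -det_tr; congr (\det _); apply/matrixP => a b; rewrite !mxE.
exact: (closure_pair hQ hS ff (@enum_val_inj _ (mem I)) hA hB).
Qed.
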